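(* Let $K_m$ and $L_n$ be regular languages over the same alphabet $\Sigma$ with state complexities $m$ and $n$ respectively. Then the state complexity of $K_m^R\setminus L_n^R$ is at most $(2^m-1)(2^n-1)+1$, and the state complexity of $K_m^R\oplus L_n^R$ is at most $2^{m+n-1}$.
   Context: The state complexity of a regular language is the number of states of its minimal complete DFA. $L^R$ denotes the reversal of $L$; $\setminus$ is set difference and $\oplus$ is symmetric difference. *)

(* Defs.v *)
From mathcomp Require Import all_boot.
Set Implicit Arguments. Unset Strict Implicit. Unset Printing Implicit Defensive.

Definition lang (Sigma : finType) := seq Sigma -> bool.

Record dfa (Sigma : finType) (k : nat) := DFA {
  dfa_start : 'I_k;
  dfa_trans : 'I_k -> Sigma -> 'I_k;
  dfa_final : {set 'I_k} }.

Definition dfa_run (Sigma : finType) k (A : dfa Sigma k) (q : 'I_k) (w : seq Sigma) : 'I_k :=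
  foldl (dfa_trans A) q w.

Definition dfa_accepts (Sigma : finType) k (A : dfa Sigma k) (w : seq Sigma) : bool :=
  dfa_run A (dfa_start A) w \in dfa_final A.

Definition recognizes (Sigma : finType) k (A : dfa Sigma k) (L : lang Sigma) : Prop :=
  forall w, dfa_accepts A w = L w.

Definition sc_le (Sigma : finType) (L : lang Sigma) (N : nat) : Prop :=
  exists k (A : dfa Sigma k), k <= N /\ recognizes A L.

Definition sc_eq (Sigma : finType) (L : lang Sigma) (m : nat) : Prop :=
  (exists A : dfa Sigma m, recognizes A L) /\
  (forall k (A : dfa Sigma k), recognizes A L -> m <= k).

Definition lrev (Sigma : finType) (L : lang Sigma) : lang Sigma := fun w => L (rev w).
Definition ldiff (Sigma : finType) (K L : lang Sigma) : lang Sigma := fun w => K w && ~~ L w.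
Definition lsymdiff (Sigma : finType) (K L : lang Sigma) : lang Sigma := fun w => K w (+) L w.

(* Main.v *)
Require Import Defs.
From mathcomp Require Import all_boot.

Section Aux.
Variable Sigma : finType.

Lemma sc_le_fin (T : finType) (s : T) (d : T -> Sigma -> T) (acc : pred T)
  (L : lang Sigma) N :
  #|T| <= N -> (forall w, acc (foldl d s w) = L w) -> sc_le L N.
Proof.
move=> HN HL.
exists #|T|.
exists (DFA (enum_rank s) (fun i a => enum_rank (d (enum_val i) a))
            [set i | acc (enum_val i)]).
split => // w.
have E : forall x, dfa_run (DFA (enum_rank s) (fun i a => enum_rank (d (enum_val i) a))
            [set i | acc (enum_val i)]) (enum_rank x) w = enum_rank (foldl d x w).
  elim: w => [|a w IH] x //=.
  by rewrite /dfa_run /= enum_rankK -IH.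
by rewrite /dfa_accepts /= E inE enum_rankK HL.
Qed.

Lemma sc_le_quot (X : finType) (r : X -> X) (s : X) (d : X -> Sigma -> X)
  (acc : pred X) (L : lang Sigma) N :
  (forall x, r (r x) = r x) ->
  (forall x a, r (d (r x) a) = r (d x a)) ->
  (forall x, acc (r x) = acc x) ->
  #|[pred x | r x == x]| <= N ->
  (forall w, acc (foldl d s w) = L w) -> sc_le L N.
Proof.
move=> rr rd ra HN HL.
have fix0 : forall x, r (r x) == r x by move=> x; rewrite rr.
pose Y := {x : X | r x == x}.
pose sY : Y := exist _ (r s) (fix0 s).
pose dY (y : Y) a : Y := exist _ (r (d (val y) a)) (fix0 _).
have E1 : forall w x, r (foldl d (r x) w) = r (foldl d x w).
  elim=> [|a w IH] x /=; first by rewrite rr.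
  by rewrite -IH rd IH.
have E2 : forall w y, val (foldl dY y w) = r (foldl d (val y) w).
  elim=> [|a w IH] y /=; first by case: y => x /= /eqP.
  by rewrite IH /= E1.
apply: (@sc_le_fin Y sY dY (fun y => acc (val y))).
  by rewrite card_sig.
by move=> w; rewrite E2 /= E1 ra HL.
Qed.

Definition pre k (A : dfa Sigma k) (S : {set 'I_k}) (a : Sigma) : {set 'I_k} :=
  (fun q => dfa_trans A q a) @^-1: S.

Arguments pre {k}.

Lemma foldl_pre k (A : dfa Sigma k) w S :
  foldl (pre A) S w = [set q | dfa_run A q (rev w) \in S].
Proof.
elim: w S => [|a w IH] S /=; first by apply/setP => q; rewrite inE.
rewrite IH; apply/setP => q; rewrite !inE.
by rewrite rev_cons /dfa_run foldl_rcons.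
Qed.

Lemma rev_acc k (A : dfa Sigma k) (K : lang Sigma) w :
  recognizes A K -> lrev K w = (dfa_start A \in foldl (pre A) (dfa_final A) w).
Proof.
by move=> HA; rewrite foldl_pre inE /lrev -HA.
Qed.

Lemma foldl_pair m n (A : dfa Sigma m) (B : dfa Sigma n) w S T :
  foldl (fun x a => (pre A x.1 a, pre B x.2 a)) (S, T) w =
  (foldl (pre A) S w, foldl (pre B) T w).
Proof. by elim: w S T => [|a w IH] S T //=; rewrite IH. Qed.

Lemma card_sets k : #|{set 'I_k}| = 2 ^ k.
Proof. by rewrite -cardsT -powersetT card_powerset cardsT card_ord. Qed.

End Aux.
Arguments pre {Sigma k}.

Theorem proposition2 (Sigma : finType) (K L : lang Sigma) (m n : nat) :
  sc_eq K m -> sc_eq L n ->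
  sc_le (ldiff (lrev K) (lrev L)) ((2 ^ m - 1) * (2 ^ n - 1) + 1) /\
  sc_le (lsymdiff (lrev K) (lrev L)) (2 ^ (m + n - 1)).
Proof.
move=> [[A HA] _] [[B HB] _].
pose d := fun (x : {set 'I_m} * {set 'I_n}) a => (pre A x.1 a, pre B x.2 a).
pose s := (dfa_final A, dfa_final B).
have Hrun : forall w, foldl d s w = (foldl (pre A) (dfa_final A) w, foldl (pre B) (dfa_final B) w).
  by move=> w; rewrite /d /s foldl_pair.
split.
- pose r := fun x : {set 'I_m} * {set 'I_n} =>
    if (x.1 == set0) || (x.2 == setT) then (set0, setT) else x.
  pose acc := fun x : {set 'I_m} * {set 'I_n} =>
    (dfa_start A \in x.1) && (dfa_start B \notin x.2).
  apply: (@sc_le_quot _ _ r s d acc).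
  + move=> [S T]; rewrite {2}/r /=; case: ifP => H; rewrite /r /= ?H //; by rewrite !eqxx.
  + move=> [S T] a; rewrite /r /d /=.
    case H: ((S == set0) || (T == setT)) => //=.
    rewrite /pre preimset0 preimsetT !eqxx /=.
    by case/orP: H => /eqP HH; rewrite HH ?preimset0 ?preimsetT ?eqxx ?orbT /=.
  + move=> [S T]; rewrite /r /acc /=.
    case: ifP => //= /orP [] /eqP ->; by rewrite ?inE ?andbF.
  + pose P := setX [set S : {set 'I_m} | S != set0] [set T : {set 'I_n} | T != setT].
    apply: leq_trans (_ : #|(set0, setT) |: P| <= _).
      apply: subset_leq_card; apply/subsetP => [[S T]]; rewrite !inE /r /=.
      case: ifP => [_ /eqP <-|/negbT]; first by rewrite eqxx.
      by rewrite negb_or => -> _; rewrite orbT.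
    rewrite cardsU1 cardsX addnC leq_add //; last by case: (_ \notin _).
    have -> : [set S : {set 'I_m} | S != set0] = [set~ set0] by apply/setP=> S; rewrite !inE.
    have -> : [set T : {set 'I_n} | T != setT] = [set~ setT] by apply/setP=> S; rewrite !inE.
    by rewrite !cardsC1 !card_sets !subn1.
  + move=> w; rewrite Hrun /acc /ldiff /=.
    by rewrite (@rev_acc _ _ _ _ w HA) (@rev_acc _ _ _ _ w HB).
- have m0 : 0 < m by have := ltn_ord (dfa_start A); apply: leq_ltn_trans.
  pose r := fun x : {set 'I_m} * {set 'I_n} =>
    if (dfa_start A) \in x.1 then (~: x.1, ~: x.2) else x.
  pose acc := fun x : {set 'I_m} * {set 'I_n} =>
    (dfa_start A \in x.1) (+) (dfa_start B \in x.2).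
  have rC : forall S T, r (~: S, ~: T) = r (S, T).
    move=> S T; rewrite /r /= inE; case: ((dfa_start A) \in S) => /=; by rewrite ?setCK.
  apply: (@sc_le_quot _ _ r s d acc).
  + move=> [S T]; rewrite /r /=; case H: ((dfa_start A) \in S) => /=; by rewrite ?inE ?H.

  + move=> [S T] a; rewrite {2}/r /=; case: ifP => //= _.
    by rewrite /d /= /pre !preimsetC rC.
  + move=> [S T]; rewrite /r /acc /=; case H: (dfa_start A \in S) => /=;
    by rewrite ?inE H; case: (dfa_start B \in T).
  + apply: (@leq_trans #|setX (powerset [set~ (dfa_start A)]) [set: {set 'I_n}]|).
      apply: subset_leq_card; apply/subsetP => [[S T]]; rewrite !inE /r /=.
      case: ifP => [_ /eqP [] E _|H _].
        by move/setP: E => /(_ (dfa_start A)); rewrite !inE; case: ((dfa_start A) \in S).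
      rewrite andbT; apply/subsetP => q Hq; rewrite !inE.
      by apply: contraFneq H => <-.
    rewrite cardsX card_powerset cardsC1 card_ord cardsT card_sets.
    by rewrite -expnD -subn1 addnBAC.
  + move=> w; rewrite Hrun /acc /lsymdiff /=.
    by rewrite (@rev_acc _ _ _ _ w HA) (@rev_acc _ _ _ _ w HB).
Qed.
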